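(* Let $\mathcal F\subseteq\mathcal G$ be lattice filters of an MV-algebra $\mathcal L$, and let $Q$ be an implication filter with $Q\subseteq\mathcal K(\mathcal G)$. Then $$(\mathcal F\sqsubseteq\!\!\to\mathcal G)/Q=(\mathcal F/Q)\sqsubseteq\!\!\to(\mathcal G/Q),$$ where the right-hand side is computed in the MV-algebra $\mathcal L/Q$.
   Context: $\mathcal L=(L,\oplus,\lnot,0)$ is an MV-algebra. We write $1=\lnot0$, $x\otimes y=\lnot(\lnot x\oplus\lnot y)$, and $x\to y=\lnot x\oplus y$, and use the usual lattice order. A lattice filter is a nonempty upward-closed subset closed under $\wedge$. An implication filter is a set $Q\ni1$ closed under modus ponens. $\mathcal L/Q$ is the quotient by $x\sim_Q y\iff x\to y,\ y\to x\in Q$, and $X/Q=\{[x]_Q : x\in X\}$. For an upward-closed $\mathcal F$ (in any MV-algebra) and $a$, let $\mathcal F_a=\{z: z\to a\notin\mathcal F\}$, and let $\mathcal K(\mathcal F)=\{z:\forall a\notin\mathcal F,\ z\to a\notin\mathcal F\}$. For $\mathcal F\subseteq\mathcal G$ we put $\mathcal F\sqsubseteq\!\!\to\mathcal G=\bigcap_{a\notin\mathcal G}\mathcal F_a$. *)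

(* Defs.v *)
From Stdlib Require Import ClassicalEpsilon.
Set Implicit Arguments.

Record MVAlgebra := {
  mv_car :> Type;
  mv_oplus : mv_car -> mv_car -> mv_car;
  mv_neg : mv_car -> mv_car;
  mv_zero : mv_car;
  mv_assoc : forall x y z, mv_oplus x (mv_oplus y z) = mv_oplus (mv_oplus x y) z;
  mv_comm : forall x y, mv_oplus x y = mv_oplus y x;
  mv_zero_r : forall x, mv_oplus x mv_zero = x;
  mv_negneg : forall x, mv_neg (mv_neg x) = x;
  mv_one_abs : forall x, mv_oplus x (mv_neg mv_zero) = mv_neg mv_zero;
  mv_luk : forall x y, mv_oplus (mv_neg (mv_oplus (mv_neg x) y)) y
                     = mv_oplus (mv_neg (mv_oplus (mv_neg y) x)) x
}.

Section MV.
Variable L : MVAlgebra.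
Definition mv_one : L := mv_neg L (mv_zero L).
Definition mv_otimes (x y : L) : L :=
  mv_neg L (mv_oplus L (mv_neg L x) (mv_neg L y)).
Definition mv_imp (x y : L) : L := mv_oplus L (mv_neg L x) y.
Definition mv_le (x y : L) : Prop := mv_imp x y = mv_one.
Definition mv_meet (x y : L) : L := mv_otimes x (mv_imp x y).

Definition upward_closed (F : L -> Prop) : Prop :=
  forall x y, F x -> mv_le x y -> F y.
Definition lattice_filter (F : L -> Prop) : Prop :=
  (exists x, F x) /\ upward_closed F /\ (forall x y, F x -> F y -> F (mv_meet x y)).
Definition implication_filter (Q : L -> Prop) : Prop :=
  Q mv_one /\ (forall x y, Q x -> Q (mv_imp x y) -> Q y).

Definition simQ (Q : L -> Prop) (x y : L) : Prop := Q (mv_imp x y) /\ Q (mv_imp y x).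
Definition cls (Q : L -> Prop) (x : L) : L -> Prop := fun y => simQ Q x y.

(* Elements of L/Q: subsets of L that are classes [x]_Q. *)
Record QClass (Q : L -> Prop) := {
  qc_set : L -> Prop;
  qc_rep : exists x, qc_set = cls Q x
}.

Definition qclass_of (Q : L -> Prop) (x : L) : QClass Q :=
  {| qc_set := cls Q x; qc_rep := ex_intro _ x eq_refl |}.

Definition rep (Q : L -> Prop) (C : QClass Q) : L :=
  proj1_sig (constructive_indefinite_description _ (qc_rep C)).

Definition qimp (Q : L -> Prop) (C D : QClass Q) : QClass Q :=
  qclass_of Q (mv_imp (rep C) (rep D)).

Definition quot_set (Q : L -> Prop) (X : L -> Prop) : QClass Q -> Prop :=
  fun C => exists x, X x /\ qc_set C = cls Q x.
End MV.

(* Generic notions, stated for any carrier with an implication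
   (they only use ->; applied both in L and in L/Q). *)
Section Generic.
Variables (T : Type) (imp : T -> T -> T).
Definition F_sub (F : T -> Prop) (a : T) : T -> Prop := fun z => ~ F (imp z a).
Definition Kset (F : T -> Prop) : T -> Prop :=
  fun z => forall a, ~ F a -> ~ F (imp z a).
Definition sqimp (F G : T -> Prop) : T -> Prop :=
  fun z => forall a, ~ G a -> F_sub F a z.
End Generic.

(* Main.v *)
Require Import Defs.
From Stdlib Require Import Classical ClassicalEpsilon FunctionalExtensionality PropExtensionality.
Set Implicit Arguments.

Local Notation "x +' y" := (mv_oplus _ x y) (at level 50, left associativity).
Local Notation "!' x" := (mv_neg _ x) (at level 35, right associativity).

Lemma zero_l (L : MVAlgebra) (x : L) : mv_zero L +' x = x.
Proof. rewrite mv_comm. apply mv_zero_r. Qed.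

Lemma one_r (L : MVAlgebra) (x : L) : x +' mv_one L = mv_one L.
Proof. apply mv_one_abs. Qed.

Lemma negx_x (L : MVAlgebra) (x : L) : !' x +' x = mv_one L.
Proof.
  pose proof (mv_luk L x (mv_one L)) as H.
  unfold mv_one in *. rewrite mv_one_abs, mv_negneg, zero_l in H.
  symmetry; exact H.
Qed.

Lemma x_negx (L : MVAlgebra) (x : L) : x +' !' x = mv_one L.
Proof. rewrite mv_comm. apply negx_x. Qed.

Lemma imp_refl (L : MVAlgebra) (x : L) : mv_imp L x x = mv_one L.
Proof. apply negx_x. Qed.

Lemma imp_exch (L : MVAlgebra) (a b c : L) :
  mv_imp L a (mv_imp L b c) = mv_imp L b (mv_imp L a c).
Proof. unfold mv_imp. rewrite !mv_assoc, (mv_comm L (!' a)). reflexivity. Qed.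

Lemma imp_one (L : MVAlgebra) (x : L) : mv_imp L x (mv_one L) = mv_one L.
Proof. apply one_r. Qed.

Lemma trans_one (L : MVAlgebra) (x y z : L) :
  mv_imp L (mv_imp L x y) (mv_imp L (mv_imp L y z) (mv_imp L x z)) = mv_one L.
Proof.
  unfold mv_imp.
  rewrite (mv_comm L (!' x) z), (mv_assoc L (!' (!' y +' z)) z), mv_luk.
  rewrite <- (mv_assoc L (!' (!' z +' y)) y (!' x)), (mv_comm L y (!' x)).
  rewrite (mv_comm L (!' (!' z +' y))), mv_assoc, (mv_comm L _ (!' x +' y)).
  rewrite x_negx, mv_comm. apply one_r.
Qed.


Lemma Q_mp (L : MVAlgebra) (Q : L -> Prop) (hQ : implication_filter L Q) x y :
  Q x -> Q (mv_imp L x y) -> Q y.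
Proof. destruct hQ as [_ h]. apply h. Qed.

Lemma Q_up (L : MVAlgebra) (Q : L -> Prop) (hQ : implication_filter L Q) x y :
  Q x -> mv_imp L x y = mv_one L -> Q y.
Proof. intros Hx He. apply (Q_mp hQ x y Hx). rewrite He. apply hQ. Qed.

Lemma Q_trans (L : MVAlgebra) (Q : L -> Prop) (hQ : implication_filter L Q) x y z :
  Q (mv_imp L x y) -> Q (mv_imp L y z) -> Q (mv_imp L x z).
Proof.
  intros H1 H2. apply (Q_mp hQ _ _ H2). apply (Q_mp hQ _ _ H1).
  rewrite trans_one. apply hQ.
Qed.

Lemma sim_refl (L : MVAlgebra) (Q : L -> Prop) (hQ : implication_filter L Q) x :
  simQ L Q x x.
Proof. split; rewrite imp_refl; apply hQ. Qed.

Lemma sim_sym (L : MVAlgebra) (Q : L -> Prop) x y :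
  simQ L Q x y -> simQ L Q y x.
Proof. intros [a b]; split; assumption. Qed.

Lemma sim_trans (L : MVAlgebra) (Q : L -> Prop) (hQ : implication_filter L Q) x y z :
  simQ L Q x y -> simQ L Q y z -> simQ L Q x z.
Proof.
  intros [a b] [c d]; split; eapply Q_trans; eauto.
Qed.

Lemma cong_l (L : MVAlgebra) (Q : L -> Prop) (hQ : implication_filter L Q) x x' r :
  simQ L Q x x' -> simQ L Q (mv_imp L x r) (mv_imp L x' r).
Proof.
  intros [a b]; split.
  - apply (Q_mp hQ _ _ b). rewrite trans_one. apply hQ.
  - apply (Q_mp hQ _ _ a). rewrite trans_one. apply hQ.
Qed.

Lemma cong_r (L : MVAlgebra) (Q : L -> Prop) (hQ : implication_filter L Q) x r r' :
  simQ L Q r r' -> simQ L Q (mv_imp L x r) (mv_imp L x r').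
Proof.
  intros [a b]; split.
  - apply (Q_mp hQ _ _ a). rewrite imp_exch, trans_one. apply hQ.
  - apply (Q_mp hQ _ _ b). rewrite imp_exch, trans_one. apply hQ.
Qed.

Lemma cls_eq (L : MVAlgebra) (Q : L -> Prop) (hQ : implication_filter L Q) x y :
  simQ L Q x y -> cls L Q x = cls L Q y.
Proof.
  intros H. apply functional_extensionality; intro z.
  apply propositional_extensionality. unfold cls. split; intro H'.
  - eapply sim_trans; eauto. apply sim_sym; auto.
  - eapply sim_trans; eauto.
Qed.

Lemma cls_sim (L : MVAlgebra) (Q : L -> Prop) (hQ : implication_filter L Q) x y :
  cls L Q x = cls L Q y -> simQ L Q x y.
Proof.
  intros H. change (cls L Q x y). rewrite H. apply sim_refl; auto.
Qed.

Lemma rep_spec (L : MVAlgebra) (Q : L -> Prop) (C : QClass L Q) :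
  qc_set C = cls L Q (rep C).
Proof.
  unfold rep. destruct constructive_indefinite_description as [x Hx]. exact Hx.
Qed.

Lemma imp_K (L : MVAlgebra) (g y : L) :
  mv_imp L g (mv_imp L (mv_imp L g y) y) = mv_one L.
Proof. rewrite imp_exch. apply imp_refl. Qed.

Lemma G_sat (L : MVAlgebra) (G Q : L -> Prop) (hG : lattice_filter L G)
  (hQK : forall x, Q x -> Kset (mv_imp L) G x) g y :
  G g -> simQ L Q g y -> G y.
Proof.
  intros Hg [a _]. destruct (classic (G y)) as [h|h]; auto.
  exfalso. apply (hQK _ a y h).
  destruct hG as [_ [up _]]. apply (up g); auto. apply imp_K.
Qed.

Theorem mainTheorem10 (L : MVAlgebra) (F G Q : L -> Prop)
  (hF : lattice_filter L F) (hG : lattice_filter L G) (hFG : forall x, F x -> G x)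
  (hQ : implication_filter L Q) (hQK : forall x, Q x -> Kset (mv_imp L) G x) :
  forall C : QClass L Q,
    quot_set (Q := Q) (sqimp (mv_imp L) F G) C <->
    sqimp (@qimp L Q) (quot_set (Q := Q) F) (quot_set (Q := Q) G) C.
Proof.
  intros C. split.
  - intros [x [Hx HC]] A HnA [f [Hf Hfe]].
    set (r := rep A).
    assert (Hnr : ~ G r).
    { intro Hr. apply HnA. exists r. split; auto. apply rep_spec. }
    assert (H1 : simQ L Q (mv_imp L (rep C) r) f) by (apply cls_sim; auto).
    assert (H2 : simQ L Q x (rep C)) by (apply cls_sim; auto; rewrite <- HC; apply rep_spec).
    assert (H3 : simQ L Q f (mv_imp L x r)).
    { apply (sim_trans hQ (y := mv_imp L (rep C) r)); [apply sim_sym; auto|]. apply sim_sym, cong_l; auto. }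
    set (q := mv_imp L f (mv_imp L x r)).
    assert (Hq : Q q) by (destruct H3; auto).
    assert (Hna : ~ G (mv_imp L q r)).
    { intro Ha. apply Hnr. apply (G_sat hG hQK Ha). split.
      - apply (Q_up hQ q); auto. apply imp_K.
      - rewrite imp_exch, imp_refl, imp_one. apply hQ. }
    apply (Hx _ Hna). destruct hF as [_ [up _]]. apply (up f); auto.
    unfold mv_le. rewrite (imp_exch L x q), imp_exch. apply imp_refl.
  - intros H. exists (rep C). split; [|apply rep_spec].
    intros a Hna HFa. apply (H (qclass_of L Q a)).
    + intros [g [Hg Hge]]. apply Hna. apply (G_sat hG hQK Hg); auto.
      apply sim_sym, cls_sim; auto.
    + exists (mv_imp L (rep C) a). split; auto.
      simpl. apply cls_eq; auto. apply cong_r; auto. apply sim_sym, cls_sim; auto.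
      apply (rep_spec (qclass_of L Q a)).
Qed.
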